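(* Consider the CPDE on $\mathbb Z$ built from the graphical construction, and fix $r_0\in\mathbb N$, $T>0$. Almost surely the following holds: for all $k\in\mathbb Z$ and $n\in\mathbb N$, if there is $x\in B_{k,n}$ with $\eta_{nT}(x)=1$, then $k\in Z_n$. In particular, $Z_n=\emptyset$ implies $\eta_{nT}\equiv0$ almost surely.
   Context: Graphical construction of the CPDE on $\mathbb Z$ (edges $E=\{\{x,x+1\}\}$, parameters $v,p,\lambda$): independent Poisson processes $\mathcal O^e$ (rate $vp$), $\mathcal C^e$ (rate $v(1-p)$), $\mathcal I^e$ (rate $\lambda$) for $e\in E$ and $\mathcal R^x$ (rate 1) for $x\in\mathbb Z$; $\zeta_0$ is product Bernoulli($p$) and $\zeta_t(e)=1$ iff the last point of $(\mathcal O^e\cup\mathcal C^e)\cap[0,t]$ is in $\mathcal O^e$ (or $\zeta_0(e)=1$ if none). A valid path is a path in $\mathbb Z\times[0,\infty)$ with nondecreasing time, moving along $\{x\}\times[a,b]$ only if $\mathcal R^x\cap[a,b]=\emptyset$, and jumping across $e$ at a time $t\in\mathcal I^e$ only if $\zeta_t(e)=1$. $\eta_t$ is the set of $z$ reachable by a valid path from $\{(x,0):\eta_0(x)=1\}$ to $(z,t)$, with $\eta_0$ finite. Blocks: an edge $e$ is $n$-closed if $\zeta_t(e)=0$ for all $t\in[nT,(n+1)T)$. $V_{\{k,k+1\},n}=1$ iff no edge between $kr_0$ and $(k+1)r_0$ is $n$-closed. $e_{k,n}$ is the leftmost $n$-closed edge between $kr_0$ and $(k+1)r_0$, or $\{(k+1)r_0-1,(k+1)r_0\}$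 if none exists; $B_{k,n}=[e^+_{k-1,n},e^-_{k,n}]\cap\mathbb Z$ where $e^-,e^+$ are the left and right endpoints of $e$. $U_{k,n}=1$ iff there is a valid path contained in $B_{k,n}\times[nT,(n+1)T)$ starting at time $nT$ and ending at time $(n+1)T$. Graph $H$ on $\mathbb Z\times\mathbb N$: if $U_{k,n}=1$ add edges from $(k,n)$ to $(k-1,n+1),(k,n+1),(k+1,n+1)$; if $V_{\{k,k+1\},n}=1$ add these edges for both $(k,n)$ and $(k+1,n)$ and also the edge $(k,n)$–$(k+1,n)$. An $H$-valid path is a sequence of $H$-adjacent vertices $(k_0,n_0),\dots,(k_f,n_f)$ with $n_0\le\dots\le n_f$ and $n_i<n_f$ for all $i<f$. $Z_0=\{k:B_{k,0}$ contains an initially infected site$\}$ and for $n\ge1$, $Z_n$ is the set of $k$ such that some $H$-valid path goes from $Z_0\times\{0\}$ to $(k,n)$. *)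

(* Defs.v *)
From Stdlib Require Import Reals ZArith List.
Open Scope R_scope.

(** A realization of the graphical construction of the CPDE on Z.
    The edge {x, x+1} is indexed by its left endpoint x : Z.
    Poisson point processes are represented by their (random) point sets,
    i.e. predicates on R. *)
Record GC := {
  gc_O : Z -> R -> Prop;      (* opening marks  O^e, rate v p       *)
  gc_C : Z -> R -> Prop;      (* closing marks  C^e, rate v (1-p)   *)
  gc_I : Z -> R -> Prop;      (* infection marks I^e, rate lambda   *)
  gc_R : Z -> R -> Prop;      (* recovery marks R^x, rate 1         *)
  gc_zeta0 : Z -> Prop;
  gc_eta0 : Z -> Prop
}.

Definition zeta (g : GC) (t : R) (e : Z) : Prop :=
  (exists s, 0 <= s <= t /\ gc_O g e s /\
     forall u, 0 <= u <= t -> (gc_O g e u \/ gc_C g e u) -> u <= s)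
  \/ ((forall u, 0 <= u <= t -> ~ gc_O g e u /\ ~ gc_C g e u) /\ gc_zeta0 g e).

(** Valid paths from (x,s) to (y,t), all of whose sites lie in A
    (A = everything for unrestricted valid paths). *)
Inductive vpath (g : GC) (A : Z -> Prop) : Z -> R -> Z -> R -> Prop :=
| vp_refl : forall x t, A x -> vpath g A x t x t
| vp_stay : forall x s t, A x -> s <= t ->
    (forall u, s <= u <= t -> ~ gc_R g x u) -> vpath g A x s x t
| vp_right : forall x t, A x -> A (x + 1)%Z -> gc_I g x t -> zeta g t x ->
    vpath g A x t (x + 1)%Z t
| vp_left : forall x t, A x -> A (x + 1)%Z -> gc_I g x t -> zeta g t x ->
    vpath g A (x + 1)%Z t x t
| vp_trans : forall x s y t z u,
    vpath g A x s y t -> vpath g A y t z u -> vpath g A x s z u.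

Definition eta (g : GC) (t : R) (z : Z) : Prop :=
  exists x, gc_eta0 g x /\ vpath g (fun _ => True) x 0 z t.

Section Blocks.
Variables (g : GC) (r0 : nat) (T : R).
Let r := Z.of_nat r0.

Definition nclosed (n : nat) (e : Z) : Prop :=
  forall t, INR n * T <= t < INR (S n) * T -> ~ zeta g t e.

Definition between (a b e : Z) : Prop := (a <= e /\ e + 1 <= b)%Z.

Definition Vb (k : Z) (n : nat) : Prop :=
  forall e, between (k * r) ((k + 1) * r) e -> ~ nclosed n e.

Definition eleft (k : Z) (n : nat) (x : Z) : Prop :=
  (between (k * r) ((k + 1) * r) x /\ nclosed n x /\
     forall y, between (k * r) ((k + 1) * r) y -> (y < x)%Z -> ~ nclosed n y)
  \/ ((forall y, between (k * r) ((k + 1) * r) y -> ~ nclosed n y) /\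
      x = ((k + 1) * r - 1)%Z).

Definition inB (k : Z) (n : nat) (y : Z) : Prop :=
  exists a b, eleft (k - 1) n a /\ eleft k n b /\ (a + 1 <= y <= b)%Z.

Definition Ub (k : Z) (n : nat) : Prop :=
  exists x y, vpath g (inB k n) x (INR n * T) y (INR (S n) * T).

Definition Hedge0 (a b : Z * nat) : Prop :=
  let (k, n) := a in let (k', n') := b in
     (Ub k n /\ n' = S n /\ (k' = k - 1 \/ k' = k \/ k' = k + 1)%Z)
  \/ (Vb k n /\ n' = S n /\ (k' = k - 1 \/ k' = k \/ k' = k + 1)%Z)
  \/ (Vb (k - 1) n /\ n' = S n /\ (k' = k - 1 \/ k' = k \/ k' = k + 1)%Z)
  \/ (Vb k n /\ n' = n /\ k' = (k + 1)%Z).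

Definition Hadj (a b : Z * nat) : Prop := Hedge0 a b \/ Hedge0 b a.

Definition Z0set (k : Z) : Prop := exists x, inB k 0 x /\ gc_eta0 g x.

Definition Zset (n : nat) (k : Z) : Prop :=
  match n with
  | O => Z0set k
  | S _ =>
      exists (f : nat) (s : nat -> Z * nat),
        Z0set (fst (s O)) /\ snd (s O) = O /\ s f = (k, n) /\
        forall i, (i < f)%nat ->
          Hadj (s i) (s (S i)) /\ (snd (s i) <= snd (s (S i)))%nat /\
          (snd (s i) < n)%nat
  end.

End Blocks.

(* Main.v *)
From Pilot Require Import Defs.
From Stdlib Require Import Reals ZArith List Lia Lra Classical.
Import Pilot.Defs.
Open Scope R_scope.

Lemma vpath_le g A x s y t : vpath g A x s y t -> s <= t.
Proof. induction 1; lra. Qed.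

Lemma vpath_split g A x s y u : vpath g A x s y u -> forall t, s <= t <= u ->
  exists z, vpath g A x s z t /\ vpath g A z t y u.
Proof.
  induction 1; intros t' Ht.
  - assert (t' = t) by lra; subst. exists x; split; constructor; auto.
  - exists x; split; apply vp_stay; auto; try lra; intros; apply H1; lra.
  - assert (t' = t) by lra; subst. exists x; split; [apply vp_refl; auto| apply vp_right; auto].
  - assert (t' = t) by lra; subst. exists (x+1)%Z; split; [apply vp_refl; auto| apply vp_left; auto].
  - destruct (Rle_dec t' t) as [Hle|Hle].
    + assert (Hs := vpath_le _ _ _ _ _ _ H).
      destruct (IHvpath1 t') as [w [H1 H2]]; [lra|].
      exists w; split; auto. eapply vp_trans; eauto.
    + assert (Hs := vpath_le _ _ _ _ _ _ H0).
      destruct (IHvpath2 t') as [w [H1 H2]]; [lra|].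
      exists w; split; auto. eapply vp_trans; eauto.
Qed.

Lemma vpath_same g A x s y t : vpath g A x s y t -> s = t ->
  (forall e, ~ gc_I g e s) -> x = y.
Proof.
  induction 1; intros Hst HI; auto.
  - exfalso; eapply HI; eauto.
  - exfalso; eapply HI; eauto.
  - assert (H1 := vpath_le _ _ _ _ _ _ H). assert (H2 := vpath_le _ _ _ _ _ _ H0).
    assert (s = t) by lra. subst. rewrite IHvpath1; auto.
Qed.

Lemma min_exists (P : Z -> Prop) lo : forall d : nat, forall y,
  (lo <= y <= lo + Z.of_nat d)%Z -> P y ->
  exists m, (lo <= m)%Z /\ P m /\ forall y', (lo <= y' < m)%Z -> ~ P y'.
Proof.
  induction d; intros y Hy HP.
  - exists y; split; [lia|split; auto]. intros; lia.
  - destruct (classic (exists y', (lo <= y' <= lo + Z.of_nat d)%Z /\ P y')) as [[y' [H1 H2]]|Hn].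
    + eapply IHd; eauto.
    + exists y; split; [lia|split; auto]. intros y' Hy' HP'.
      apply Hn; exists y'; split; auto. lia.
Qed.

Lemma eleft_exists g r0 T k n : (0 < r0)%nat -> exists x, eleft g r0 T k n x.
Proof.
  intros Hr. unfold eleft.
  set (r := Z.of_nat r0).
  destruct (classic (exists y, between (k*r)%Z ((k+1)*r)%Z y /\ nclosed g T n y)) as [[y [Hb Hc]]|Hn].
  - destruct (min_exists (fun y => between (k*r)%Z ((k+1)*r)%Z y /\ nclosed g T n y) (k*r)%Z (Z.to_nat (y - k*r)) y) as [m [H1 [H2 H3]]].
    + unfold between in Hb. lia.
    + auto.
    + exists m. left. destruct H2. split; auto. split; auto.
      intros y' Hb' Hlt Hc'. apply (H3 y'); auto. unfold between in Hb'; lia.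
  - exists ((k+1)*r - 1)%Z. right. split; auto.
    intros y Hb Hc; apply Hn; eauto.
Qed.

Lemma eleft_bounds g r0 T k n x : (0 < r0)%nat -> eleft g r0 T k n x ->
  (k * Z.of_nat r0 <= x /\ x + 1 <= (k+1) * Z.of_nat r0)%Z.
Proof.
  intros Hr [[Hb _]|[_ He]]; unfold between in *.
  - lia.
  - subst. nia.
Qed.

Lemma inB_bounds g r0 T k n x : (0 < r0)%nat -> inB g r0 T k n x ->
  ((k-1) * Z.of_nat r0 + 1 <= x <= (k+1) * Z.of_nat r0 - 1)%Z.
Proof.
  intros Hr [a [b [Ha [Hb Hx]]]].
  apply eleft_bounds in Ha; auto. apply eleft_bounds in Hb; auto. lia.
Qed.

Lemma inB_cover g r0 T n x : (0 < r0)%nat -> exists k, inB g r0 T k n x.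
Proof.
  intros Hr. set (r := Z.of_nat r0).
  assert (Hr' : (0 < r)%Z) by (unfold r; lia).
  set (k := (x / r)%Z).
  assert (Hk : (k * r <= x < (k+1)*r)%Z).
  { unfold k. pose proof (Z.mul_div_le x r Hr'). pose proof (Z.mod_pos_bound x r Hr').
    pose proof (Z.div_mod x r ltac:(lia)). nia. }
  destruct (eleft_exists g r0 T (k-1) n Hr) as [a Ha].
  destruct (eleft_exists g r0 T k n Hr) as [b Hb].
  destruct (eleft_exists g r0 T (k+1) n Hr) as [c Hc].
  pose proof (eleft_bounds _ _ _ _ _ _ Hr Ha).
  pose proof (eleft_bounds _ _ _ _ _ _ Hr Hb).
  pose proof (eleft_bounds _ _ _ _ _ _ Hr Hc).
  fold r in H, H0, H1.
  destruct (Z_le_gt_dec x b).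
  - exists k, a, b. repeat split; auto; lia.
  - exists (k+1)%Z, b, c. replace (k+1-1)%Z with k by ring. repeat split; auto; nia.
Qed.

Definition W g r0 T (n : nat) (k : Z) : Prop :=
  exists (f : nat) (s : nat -> Z * nat),
    Z0set g r0 T (fst (s O)) /\ snd (s O) = O /\ s f = (k, n) /\
    forall i, (i < f)%nat ->
      Hadj g r0 T (s i) (s (S i)) /\ (snd (s i) <= snd (s (S i)))%nat /\
      (snd (s i) <= n)%nat.

Lemma ZtoW g r0 T n k : Zset g r0 T n k -> W g r0 T n k.
Proof.
  destruct n as [|n]; simpl.
  - intros H. exists O, (fun _ => (k, O)). simpl. repeat split; auto; intros; lia.
  - intros [f [s [H1 [H2 [H3 H4]]]]]. exists f, s. repeat split; auto;
    destruct (H4 i H) as [? [? ?]]; auto; lia.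
Qed.

Lemma ext_seq g r0 T n j p : W g r0 T n j -> Hadj g r0 T (j, n) p -> (n <= snd p)%nat ->
  exists (f : nat) (s : nat -> Z * nat),
    Z0set g r0 T (fst (s O)) /\ snd (s O) = O /\ s f = p /\
    forall i, (i < f)%nat ->
      Hadj g r0 T (s i) (s (S i)) /\ (snd (s i) <= snd (s (S i)))%nat /\
      (snd (s i) <= n)%nat.
Proof.
  intros [f [s [H1 [H2 [H3 H4]]]]] Ha Hp.
  exists (S f), (fun i => if Nat.leb i f then s i else p).
  cbv beta. rewrite (proj2 (Nat.leb_le 0 f)) by lia.
  assert (E0 : Nat.leb (S f) f = false) by (apply Nat.leb_gt; lia).
  rewrite E0. split; auto. split; auto. split; auto.
  intros i Hi. rewrite (proj2 (Nat.leb_le i f)) by lia.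
  destruct (Nat.leb (S i) f) eqn:E2.
  - apply Nat.leb_le in E2. apply H4; lia.
  - apply Nat.leb_gt in E2. assert (i = f) by lia. subst. rewrite H3. simpl.
    repeat split; auto.
Qed.

Lemma extW g r0 T n j j' : W g r0 T n j -> Hadj g r0 T (j, n) (j', n) -> W g r0 T n j'.
Proof. intros. apply (ext_seq g r0 T n j (j', n)); simpl; auto. Qed.

Lemma toZ g r0 T n j k : W g r0 T n j -> Hadj g r0 T (j, n) (k, S n) -> Zset g r0 T (S n) k.
Proof.
  intros HW Ha. destruct (ext_seq g r0 T n j (k, S n) HW Ha) as [f [s [H1 [H2 [H3 H4]]]]]; simpl; auto.
  simpl. exists f, s. repeat split; auto; destruct (H4 i H) as [? [? ?]]; auto; lia.
Qed.

Definition Inv g r0 T (n : nat) (z : Z) (t : R) : Prop :=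
  exists j, inB g r0 T j n z /\ W g r0 T n j /\
    (Vb g r0 T j n \/ Vb g r0 T (j-1) n \/
     exists y, vpath g (inB g r0 T j n) y (INR n * T) z t).

Lemma horiz g r0 T n (Hr : (0 < r0)%nat) (HI : forall e m, ~ gc_I g e (INR m * T))
  A x s y t : vpath g A x s y t ->
  INR n * T <= s -> t <= INR (S n) * T -> Inv g r0 T n x s -> Inv g r0 T n y t.
Proof.
  induction 1; intros Hs Ht Hinv.
  - auto.
  - destruct Hinv as [j [HB [HW Hd]]]. exists j; split; auto; split; auto.
    destruct Hd as [Hd|[Hd|[y Hy]]]; auto. right; right. exists y.
    eapply vp_trans; eauto. apply vp_stay; auto.
  -
    assert (Hlt : t < INR (S n) * T).
    { destruct (Rle_lt_or_eq_dec _ _ Ht); auto. subst. exfalso; eapply HI; eauto. }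
    assert (Hnc : ~ nclosed g T n x) by (intros Hc; apply (Hc t); auto; lra).
    destruct Hinv as [j [HB [HW Hd]]].
    pose proof HB as [a [b [Ha [Hb Hx]]]].
    destruct (Z.eq_dec x b) as [Exb|Exb].
    + subst b. destruct Hb as [[_ [Hc _]]|[Hall Hxe]]; [contradiction|].
      assert (HV : Vb g r0 T j n) by exact Hall.
      destruct (eleft_exists g r0 T (j+1) n Hr) as [c Hc].
      pose proof (eleft_bounds _ _ _ _ _ _ Hr Hc).
      exists (j+1)%Z. split; [|split].
      * exists x, c. replace (j+1-1)%Z with j by ring. split; [right; split; auto|split; auto].
        lia.
      * apply (extW g r0 T n j); auto. left. simpl. right; right; right. auto.
      * right; left. replace (j+1-1)%Z with j by ring. auto.
    + exists j. split; [|split]; auto.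
      * exists a, b. split; [|split]; auto; lia.
      * destruct Hd as [Hd|[Hd|[y Hy]]]; auto. right; right. exists y.
        eapply vp_trans; eauto. apply vp_right; auto. exists a, b. split; [|split]; auto; lia.
  -
    assert (Hlt : t < INR (S n) * T).
    { destruct (Rle_lt_or_eq_dec _ _ Ht); auto. subst. exfalso; eapply HI; eauto. }
    assert (Hnc : ~ nclosed g T n x) by (intros Hc; apply (Hc t); auto; lra).
    destruct Hinv as [j [HB [HW Hd]]].
    pose proof HB as [a [b [Ha [Hb Hx]]]].
    destruct (Z.eq_dec x a) as [Exa|Exa].
    + subst a. destruct Ha as [[_ [Hc _]]|[Hall Hxe]]; [contradiction|].
      assert (HV : Vb g r0 T (j-1) n) by exact Hall.
      destruct (eleft_exists g r0 T (j-1-1) n Hr) as [c Hc].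
      pose proof (eleft_bounds _ _ _ _ _ _ Hr Hc).
      exists (j-1)%Z. split; [|split].
      * exists c, x. split; [|split]; auto.
        -- right. split; auto.
        -- split; [|lia]. rewrite Hxe. nia.
      * apply (extW g r0 T n j); auto. right. simpl. right; right; right.
        split; auto. split; auto. ring.
      * left. auto.
    + exists j. split; [|split]; auto.
      * exists a, b. split; [|split]; auto; lia.
      * destruct Hd as [Hd|[Hd|[y Hy]]]; auto. right; right. exists y.
        eapply vp_trans; eauto. apply vp_left; auto. exists a, b. split; [|split]; auto; lia.
  - pose proof (vpath_le _ _ _ _ _ _ H). pose proof (vpath_le _ _ _ _ _ _ H0).
    apply IHvpath2; try lra. apply IHvpath1; try lra. auto.
Qed.

Lemma main1 g r0 T (Hr : (0 < r0)%nat) (HT : 0 < T)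
  (HI : forall e m, ~ gc_I g e (INR m * T)) :
  forall n k x, inB g r0 T k n x -> eta g (INR n * T) x -> Zset g r0 T n k.
Proof.
  induction n; intros k x HB [x0 [H0 Hp]].
  - simpl. exists x. split; auto.
    assert (x0 = x); [|subst; auto].
    eapply vpath_same; eauto. simpl; ring.
    intros e He. apply (HI e 0%nat). simpl. replace (0 * T) with 0 by ring. auto.
  - assert (Hn : 0 <= INR n * T <= INR (S n) * T).
    { rewrite S_INR. pose proof (pos_INR n). nra. }
    destruct (vpath_split _ _ _ _ _ _ Hp (INR n * T) Hn) as [z [Hz1 Hz2]].
    destruct (inB_cover g r0 T n z Hr) as [j Hj].
    assert (HZ : Zset g r0 T n j) by (apply (IHn j z Hj); exists x0; auto).
    assert (Hinv : Inv g r0 T n z (INR n * T)).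
    { exists j. split; auto. split; [apply ZtoW; auto|]. right; right. exists z. apply vp_refl; auto. }
    destruct (horiz g r0 T n Hr HI _ _ _ _ _ Hz2 (Rle_refl _) (Rle_refl _) Hinv)
      as [j' [HB' [HW Hd]]].
    pose proof (inB_bounds _ _ _ _ _ _ Hr HB). pose proof (inB_bounds _ _ _ _ _ _ Hr HB').
    assert (Hk : (k = j' - 1 \/ k = j' \/ k = j' + 1)%Z).
    { assert (k - 1 < j' + 1 /\ j' - 1 < k + 1)%Z; [|lia].
      split; apply Z.mul_lt_mono_pos_r with (p := Z.of_nat r0); lia. }
    apply (toZ g r0 T n j'); auto. left. simpl.
    destruct Hd as [Hd|[Hd|[y Hy]]].
    + right; left. auto.
    + right; right; left. auto.
    + left. split; auto. exists y, x. auto.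
Qed.

Theorem proposition3 (g : GC) (r0 : nat) (T : R) :
  (0 < r0)%nat -> 0 < T ->
  (* eta_0 is finite *)
  (exists l : list Z, forall x, gc_eta0 g x -> In x l) ->
  (* almost-sure regularity of the realization: no infection mark at a time mT *)
  (forall (e : Z) (m : nat), ~ gc_I g e (INR m * T)) ->
  (forall (k : Z) (n : nat) (x : Z),
      inB g r0 T k n x -> eta g (INR n * T) x -> Zset g r0 T n k)
  /\
  (forall n : nat, (forall k, ~ Zset g r0 T n k) ->
      forall x, ~ eta g (INR n * T) x).
Proof.
  intros Hr HT _ HI.
  split.
  - intros k n x. apply main1; auto.
  - intros n Hn x He. destruct (inB_cover g r0 T n x Hr) as [k Hk].
    apply (Hn k). eapply main1; eauto.
Qed.
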